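(* Consider a cellular network with $n$ base stations $\mathcal{N}=\{1,\dots,n\}$, base station $i$ serving a nonempty set $\mathcal{J}_i$ of users (pairwise disjoint), channel gains $g_{kj}>0$, noise power $\sigma^2>0$, and $$f_i(\mathbf{x};\mathbf{r},\mathbf{p})=\sum_{j\in\mathcal{J}_i}\frac{r_{ij}}{\log\Big(1+\frac{p_i g_{ij}}{\sum_{k\ne i} p_k g_{kj} x_k+\sigma^2}\Big)}.$$ Fix strictly positive $\mathbf{x}$ and $\mathbf{r}$. Then for every $i\in\mathcal{N}$ there exists a function $h_i(\cdot;\mathbf{x},\mathbf{r}):\mathbb{R}^{n-1}_{++}\to\mathbb{R}_{++}$ such that for every $\bar{\mathbf{p}}_i\in\mathbb{R}^{n-1}_{++}$, $p_i=h_i(\bar{\mathbf{p}}_i;\mathbf{x},\mathbf{r})$ is the unique $p_i>0$ with $x_i=f_i(\mathbf{x};\mathbf{r},\mathbf{p})$. In particular, if strictly positive $\mathbf{p},\mathbf{x},\mathbf{r}$ satisfy $\mathbf{x}=\mathbf{f}(\mathbf{x};\mathbf{r},\mathbf{p})$, then $p_i=h_i(\bar{\mathbf{p}}_i;\mathbf{x},\mathbf{r})$ for all $i=1,\dots,n$, i.e., in vector form $\mathbf{p}=\mathbf{h}(\mathbf{p};\mathbf{x},\mathbf{r})$.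
   Context: $\log$ is natural logarithm; $\mathbb{R}_{++}$ denotes positive reals. For a vector $\mathbf{p}\in\mathbb{R}^n$, $\bar{\mathbf{p}}_i\in\mathbb{R}^{n-1}$ is $\mathbf{p}$ with its $i$th component removed (note $f_i$ depends on $\mathbf{p}$ only through $p_i$ and $\bar{\mathbf{p}}_i$). $\mathbf{h}(\mathbf{p};\mathbf{x},\mathbf{r})=(h_1(\bar{\mathbf{p}}_1;\mathbf{x},\mathbf{r}),\dots,h_n(\bar{\mathbf{p}}_n;\mathbf{x},\mathbf{r}))^T$. *)

(* Defs.v *)
From HB Require Import structures.
From mathcomp Require Import all_boot all_order all_algebra.
From mathcomp Require Import all_classical all_reals all_analysis.
Set Implicit Arguments. Unset Strict Implicit. Unset Printing Implicit Defensive.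
Import Order.TTheory GRing.Theory Num.Theory.
Local Open Scope ring_scope.

Definition others (n : nat) (i : 'I_n) := {k : 'I_n | k != i}.

Definition bar (R : Type) (n : nat) (i : 'I_n) (p : 'I_n -> R) : others i -> R :=
  fun k => p (val k).

Definition join (R : Type) (n : nat) (i : 'I_n) (pi : R) (pb : others i -> R)
  : 'I_n -> R :=
  fun k => match @insub _ (fun k : 'I_n => k != i) _ k with
           | Some k' => pb k'
           | None => pi
           end.

Definition f (R : realType) (n : nat) (U : finType) (J : 'I_n -> {set U})
  (g : 'I_n -> U -> R) (sigma2 : R) (i : 'I_n)
  (x : 'I_n -> R) (r : 'I_n -> U -> R) (p : 'I_n -> R) : R :=
  \sum_(j in J i)
     r i j / ln (1 + p i * g i j
                     / (\sum_(k < n | k != i) p k * g k j * x k + sigma2)).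
Arguments bar {R n} i p _.

(* Main.v *)
Require Import Defs.
From mathcomp Require Import all_boot all_order all_algebra all_classical all_reals all_analysis.
Import Order.TTheory GRing.Theory Num.Theory.
From mathcomp Require Import ring.
Import numFieldNormedType.Exports.
Local Open Scope ring_scope.

Lemma cont_sum (R : realType) (U : Type) (s : seq U) (P : pred U) (G : U -> R -> R) (t : R) :
  (forall j, P j -> {for t, continuous (G j)}) ->
  {for t, continuous (fun y => \sum_(j <- s | P j) G j y)}.
Proof.
move=> HG; elim: s => [|j s IH].
  have -> : (fun y => \sum_(j <- [::] | P j) G j y) = (fun=> 0).
    by apply/funext => y; rewrite big_nil.
  exact: cvg_cst.
case: (boolP (P j)) => Pj.
  have -> : (fun y => \sum_(i <- j :: s | P i) G i y) =
     (fun y => G j y + \sum_(i <- s | P i) G i y).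
    by apply/funext => y; rewrite big_cons Pj.
  exact: (cvgD (HG j Pj) IH).
have -> : (fun y => \sum_(i <- j :: s | P i) G i y) =
     (fun y => \sum_(i <- s | P i) G i y).
  by apply/funext => y; rewrite big_cons (negbTE Pj).
exact: IH.
Qed.

Lemma cont_term (R : realType) (c a t : R) : 0 < a -> 0 < t ->
  {for t, continuous (fun y : R => c / ln (1 + y * a))}.
Proof.
move=> a0 t0.
have h1 : 1 < 1 + t * a by rewrite ltrDl mulr_gt0.
apply: cvgM; first exact: cvg_cst.
apply: cvgV; first by rewrite gt_eqF // ln_gt0.
have hi : {for t, continuous (fun y : R => 1 + y * a)}.
  apply: cvgD; first exact: cvg_cst.
  apply: cvgMl; exact: cvg_id.
have hc := continuous_comp hi (continuous_ln (lt_trans ltr01 h1)).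
exact: hc.
Qed.

Section Core.
Variables (R : realType) (U : finType) (A : {set U}) (a r : U -> R) (X : R).
Hypothesis Hne : exists j0, j0 \in A.
Hypothesis Ha : forall j, j \in A -> 0 < a j.
Hypothesis Hr : forall j, j \in A -> 0 < r j.
Hypothesis HX : 0 < X.

Let F (t : R) := \sum_(j in A) r j / ln (1 + t * a j).

Lemma term_pos t j : 0 < t -> j \in A -> 0 < r j / ln (1 + t * a j).
Proof.
move=> t0 jA; rewrite divr_gt0 ?Hr // ln_gt0 // ltrDl mulr_gt0 ?Ha //.
Qed.

Lemma F_strict t s : 0 < t -> t < s -> F s < F t.
Proof.
move=> t0 ts; have s0 := lt_trans t0 ts.
rewrite /F; apply: ltr_sum.
  case: Hne => j0 j0A; apply/hasP; exists j0 => //; exact: mem_index_enum.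
move=> j jA; have aj := Ha _ jA.
have h1 : 1 < 1 + t * a j by rewrite ltrDl mulr_gt0.
have h2 : 1 < 1 + s * a j by rewrite ltrDl mulr_gt0.
rewrite ltr_pM2l ?Hr // ltf_pV2 ?posrE ?ln_gt0 // ltr_ln ?posrE ?(lt_trans ltr01) //.
by rewrite ltrD2l ltr_pM2r.
Qed.

Lemma F_uniq t s : 0 < t -> 0 < s -> F t = X -> F s = X -> t = s.
Proof.
move=> t0 s0 Ft Fs; case: (ltgtP t s) => // h.
  by have := F_strict _ _ t0 h; rewrite Ft Fs ltxx.
by have := F_strict _ _ s0 h; rewrite Ft Fs ltxx.
Qed.

Lemma F_exists : exists t, 0 < t /\ F t = X.
Proof.
case: Hne => j0 j0A.
set a0 := (expR (r j0 / X) - 1) / a j0.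
have a00 : 0 < a0.
  by rewrite /a0 divr_gt0 ?Ha // subr_gt0 expR_gt1 divr_gt0 ?Hr.
have Fa0 : X <= F a0.
  rewrite /F (bigD1 j0) //=.
  have -> : 1 + a0 * a j0 = expR (r j0 / X).
    rewrite /a0 -mulrA mulVf ?mulr1; first by rewrite addrC subrK.
    by rewrite gt_eqF ?Ha.
  rewrite expRK invf_div mulrCA mulfV ?gt_eqF ?Hr // mulr1 lerDl.
  by apply: sumr_ge0 => j /andP[jA _]; apply: ltW; apply: term_pos.
set C : R := #|A|%:R.
have C0 : 0 < C.
  by rewrite /C ltr0n; apply/card_gt0P; exists j0.
set b := a0 + \sum_(j in A) expR (r j * C / X) / a j.
have bge : forall j, j \in A -> expR (r j * C / X) / a j <= b.
  move=> j jA; rewrite /b (bigD1 j) //= addrCA lerDl addr_ge0 ?(ltW a00) //.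
  apply: sumr_ge0 => k /andP[kA _]; apply: ltW; rewrite divr_gt0 ?expR_gt0 ?Ha //.
have b0 : a0 <= b.
  rewrite /b lerDl; apply: sumr_ge0 => k kA; apply: ltW; rewrite divr_gt0 ?expR_gt0 ?Ha //.
have b00 : 0 < b := lt_le_trans a00 b0.
have Fb : F b <= X.
  rewrite /F (@le_trans _ _ (\sum_(j in A) X / C)) //.
    apply: ler_sum => j jA; have aj := Ha _ jA; have rj := Hr _ jA.
    have cj : 0 < r j * C / X by rewrite divr_gt0 ?mulr_gt0.
    have h2 : 1 < 1 + b * a j by rewrite ltrDl mulr_gt0.
    have hl : r j * C / X <= ln (1 + b * a j).
      rewrite -ler_expR lnK ?posrE ?(lt_trans ltr01) //.
      apply: (@le_trans _ _ (b * a j)); last by rewrite lerDr.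
      by rewrite -ler_pdivrMr //; exact: bge.
    rewrite ler_pdivrMr ?ln_gt0 //.
    apply: (@le_trans _ _ (X / C * (r j * C / X))); last first.
      by rewrite ler_pM2l // divr_gt0.
    have -> : X / C * (r j * C / X) = r j.
      by field; rewrite !gt_eqF.
    by [].
  by rewrite sumr_const -mulr_natr -/C mulfVK ?gt_eqF.
have hcont : {within `[a0, b], continuous F}%classic.
  apply: continuous_in_subspaceT => t; rewrite inE /= in_itv /= => /andP[ht _].
  apply: cont_sum => j jA; apply: cont_term; [exact: Ha | exact: lt_le_trans ht].
have Fba : F b <= F a0 := le_trans Fb Fa0.
have hv : Num.min (F a0) (F b) <= X <= Num.max (F a0) (F b).
  by rewrite (min_r Fba) (max_l Fba) Fb Fa0.
have [c cin Fc] := IVT b0 hcont hv.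
by exists c; split => //; move: cin; rewrite in_itv /= => /andP[h _]; exact: lt_le_trans h.
Qed.

End Core.

Lemma join_i (R : Type) n (i : 'I_n) (t : R) (pb : others i -> R) : join t pb i = t.
Proof. by rewrite /join insubF // eqxx. Qed.


Lemma join_k (R : Type) n (i k : 'I_n) (t u : R) (pb : others i -> R) : k != i -> join t pb k = join u pb k.
Proof. by move=> ki; rewrite /join insubT. Qed.

Lemma join_pos (R : realType) n (i k : 'I_n) (t : R) (pb : others i -> R) :
  0 < t -> (forall k, 0 < pb k) -> 0 < join t pb k.
Proof. by move=> t0 hp; rewrite /join; case: insub. Qed.

Lemma join_bar (R : Type) n (i : 'I_n) (p : 'I_n -> R) : join (p i) (bar i p) = p.
Proof.
by apply/funext => k; rewrite /join; case: insubP => [k' _ <-|/negPn /eqP ->].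
Qed.

Theorem lemma4 (R : realType) (n : nat) (U : finType) (J : 'I_n -> {set U})
  (g : 'I_n -> U -> R) (sigma2 : R) (x : 'I_n -> R) (r : 'I_n -> U -> R) :
  (forall i, J i != finset.set0) ->
  (forall i k, i != k -> [disjoint J i & J k]) ->
  (forall k j, 0 < g k j) ->
  0 < sigma2 ->
  (forall i, 0 < x i) ->
  (forall i j, j \in J i -> 0 < r i j) ->
  exists h : forall i : 'I_n, (others i -> R) -> R,
    (forall (i : 'I_n) (pb : others i -> R), (forall k, 0 < pb k) ->
       0 < h i pb /\
       (forall pi : R, 0 < pi ->
          (x i = f J g sigma2 i x r (join pi pb) <-> pi = h i pb))) /\
    (forall p : 'I_n -> R, (forall k, 0 < p k) ->
       (forall i, x i = f J g sigma2 i x r p) ->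
       forall i, p i = h i (bar i p)).
Proof.
move=> HJ _ Hg Hs Hx Hr.
pose D i (pb : others i -> R) j :=
  \sum_(k < n | k != i) join 1 pb k * g k j * x k + sigma2.
pose a i pb j := g i j / D i pb j.
have fE : forall (i : 'I_n) (pb : others i -> R) (t : R), f J g sigma2 i x r (join t pb) =
    \sum_(j in J i) r i j / ln (1 + t * a i pb j).
  move=> i pb t; rewrite /f; apply: eq_bigr => j _.
  have e : \sum_(k < n | k != i) join t pb k * g k j * x k =
      \sum_(k < n | k != i) join 1 pb k * g k j * x k.
    by apply: eq_bigr => k ki; rewrite (join_k _ _ _ _ _ 1 _ ki).
  by rewrite join_i e -mulrA.
have Dpos : forall (i : 'I_n) (pb : others i -> R) j, (forall k, 0 < pb k) -> 0 < D i pb j.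
  move=> i pb j hp; rewrite /D ltr_wpDl //; apply: sumr_ge0 => k _.
  by rewrite mulr_ge0 ?ltW // mulr_gt0 // join_pos.
have apos : forall (i : 'I_n) (pb : others i -> R) j, (forall k, 0 < pb k) -> 0 < a i pb j.
  by move=> i pb j hp; rewrite /a divr_gt0 // Dpos.
have Hne : forall i, exists j0, j0 \in J i.
  by move=> i; have /set0Pn := HJ i.
have Hex : forall (i : 'I_n) (pb : others i -> R), exists t : R, 0 < t /\
    ((forall k, 0 < pb k) -> f J g sigma2 i x r (join t pb) = x i).
  move=> i pb; case: (pselect (forall k, 0 < pb k)) => hp; last first.
    by exists 1; split.
  have [t [t0 Ft]] := @F_exists R U (J i) (a i pb) (r i) (x i) (Hne i) (fun j _ => apos i pb j hp) (Hr i) (Hx i).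
  by exists t; split => // _; rewrite fE.
pose h i pb := sval (cid (Hex i pb)).
have hP : forall (i : 'I_n) (pb : others i -> R), 0 < h i pb /\
    ((forall k, 0 < pb k) -> f J g sigma2 i x r (join (h i pb) pb) = x i).
  by move=> i pb; rewrite /h; case: cid.
have part1 : forall (i : 'I_n) (pb : others i -> R), (forall k, 0 < pb k) ->
       0 < h i pb /\
       (forall pi : R, 0 < pi ->
          (x i = f J g sigma2 i x r (join pi pb) <-> pi = h i pb)).
  move=> i pb hp; have [h0 hf] := hP i pb; split => // pi pi0; split.
    move=> e; apply: (@F_uniq R U (J i) (a i pb) (r i) (x i) (Hne i) (fun j _ => apos i pb j hp) (Hr i) _ _ pi0 h0).
      by rewrite -fE.
    by rewrite -fE hf.
  by move=> ->; rewrite hf.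
exists h; split => // p hp hfix i.
have hb : forall k, 0 < bar i p k by move=> k; exact: hp.
have [_ H] := part1 i (bar i p) hb.
by apply/H => //; rewrite join_bar.
Qed.
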